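(* For every integer $r\ge2$, $$\zeta(r)=\frac{1}{(1-2^{1-r})\,r!}\sum_{n=1}^\infty\frac{1}{2^{n+1}}\,Y_r\!\left(0!\,H_n^{(1)},1!\,H_n^{(2)},\dots,(r-1)!\,H_n^{(r)}\right),$$ the series being convergent.
   Context: $\zeta$ is the Riemann zeta function. $H_n^{(m)}=\sum_{k=1}^nk^{-m}$. Complete (exponential) Bell polynomials: $Y_0=1$ and for $r\ge1$, $Y_r(x_1,\dots,x_r)=\sum \frac{r!}{k_1!\cdots k_r!}\prod_{j=1}^r\left(\frac{x_j}{j!}\right)^{k_j}$, the sum over all tuples of nonnegative integers $(k_1,\dots,k_r)$ with $k_1+2k_2+\cdots+rk_r=r$. *)

(* Defs.v *)
From Stdlib Require Import Reals Lra Lia ZArith List.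
Import ListNotations.
Open Scope R_scope.

Fixpoint all_lists (len bound : nat) : list (list nat) :=
  match len with
  | O => [nil]
  | S l => flat_map (fun a => map (cons a) (all_lists l bound)) (seq 0 (S bound))
  end.

Fixpoint wsum (j : nat) (k : list nat) : nat :=
  match k with
  | nil => O
  | a :: k' => (j * a + wsum (S j) k')%nat
  end.

Fixpoint bell_prod (x : nat -> R) (j : nat) (k : list nat) : R :=
  match k with
  | nil => 1
  | a :: k' => (/ INR (fact a)) * (x j / INR (fact j)) ^ a * bell_prod x (S j) k'
  end.

(* Complete exponential Bell polynomial Y_r(x_1,...,x_r):
   sum over tuples (k_1..k_r) of naturals with k_1+2k_2+...+r k_r = r
   of r!/(k_1!...k_r!) prod_j (x_j/j!)^{k_j}.  Entries are bounded by r
   (automatic, since j*k_j <= r). Y_0 = 1 (empty tuple). *)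
Definition bellY (r : nat) (x : nat -> R) : R :=
  fold_right Rplus 0
    (map (fun k => INR (fact r) * bell_prod x 1 k)
       (filter (fun k => Nat.eqb (wsum 1 k) r) (all_lists r r))).

Definition harm (n m : nat) : R :=
  fold_right Rplus 0 (map (fun k => / (INR k) ^ m) (seq 1 n)).

(* Main.v *)
Require Import Defs.
From Stdlib Require Import Reals ZArith List.
From Stdlib Require Import Lra ClassicalEpsilon FunctionalExtensionality Factorial.
From HB Require Import structures.
From mathcomp Require Import all_boot all_algebra.

Definition Req_bool (x y : R) : bool := if Req_EM_T x y then true else false.
Lemma Req_boolP : Equality.axiom Req_bool.
Proof. move=> x y; rewrite /Req_bool; case: Req_EM_T => h; [exact: ReflectT|exact: ReflectF]. Qed.
HB.instance Definition _ := hasDecEq.Build R Req_boolP.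

Definition Rfind (P : pred R) (n : nat) : option R :=
  match excluded_middle_informative (exists x, P x) with
  | left h => Some (proj1_sig (constructive_indefinite_description _ h))
  | right _ => None
  end.
Lemma Rfind_correct P n x : Rfind P n = Some x -> P x.
Proof. rewrite /Rfind; case: excluded_middle_informative => // h [<-].
by case: constructive_indefinite_description. Qed.
Lemma Rfind_complete (P : pred R) : (exists x, P x) -> exists n, Rfind P n.
Proof. move=> h; exists 0%N; rewrite /Rfind; case: excluded_middle_informative => //. Qed.
Lemma Rfind_ext (P Q : pred R) : P =1 Q -> Rfind P =1 Rfind Q.
Proof. move=> h; have -> : P = Q by apply: functional_extensionality. by []. Qed.
HB.instance Definition _ := hasChoice.Build R Rfind_correct Rfind_complete Rfind_ext.

Lemma RaddA : associative Rplus. Proof. move=> *; lra. Qed.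
Lemma RaddC : commutative Rplus. Proof. move=> *; lra. Qed.
Lemma Radd0 : left_id R0 Rplus. Proof. move=> *; lra. Qed.
Lemma RaddN : left_inverse R0 Ropp Rplus. Proof. move=> *; lra. Qed.
HB.instance Definition _ := GRing.isZmodule.Build R RaddA RaddC Radd0 RaddN.
Lemma RmulA : associative Rmult. Proof. move=> *; ring. Qed.
Lemma RmulC : commutative Rmult. Proof. move=> *; ring. Qed.
Lemma Rmul1 : left_id R1 Rmult. Proof. move=> *; ring. Qed.
Lemma RmulD : left_distributive Rmult Rplus. Proof. move=> *; ring. Qed.
Lemma Rone0 : (R1 != R0). Proof. apply/eqP; exact R1_neq_R0. Qed.
HB.instance Definition _ := GRing.Zmodule_isComNzRing.Build R RmulA RmulC Rmul1 RmulD Rone0.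

Import GRing.Theory.
Local Open Scope ring_scope.
Lemma addE (x y : R) : (x + y)%R = Rplus x y. Proof. by []. Qed.
Lemma mulE (x y : R) : (x * y)%R = Rmult x y. Proof. by []. Qed.
Lemma natE n : (n%:R : R) = INR n.
Proof. elim: n => [//|n IH]. rewrite S_INR -IH -[n.+1]addn1 natrD. by []. Qed.

Local Open Scope ring_scope.

Lemma foldr_big (f : list nat -> R) (P : list nat -> bool) l :
  List.fold_right Rplus R0 (List.map f (List.filter P l)) = \sum_(k <- l | P k) f k.
Proof.
elim: l => [|a l IH]; first by rewrite big_nil.
rewrite big_cons /=; case: (P a) => //=. by rewrite IH.
Qed.

Lemma seq_iota s n : List.seq s n = iota s n.
Proof. by elim: n s => [|n IH] s //=; rewrite IH. Qed.

Lemma flat_map_flatten (A B : Type) (f : A -> list B) l : List.flat_map f l = flatten (map f l).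
Proof. by elim: l => [|a l IH] //=; rewrite IH. Qed.

Lemma Lmap_map (A B : Type) (f : A -> B) l : List.map f l = map f l.
Proof. by elim: l => [|a l IH] //=; rewrite IH. Qed.

Lemma eqbE a b : Nat.eqb a b = (a == b).
Proof. by elim: a b => [|a IH] [|b] //=. Qed.

Definition uu (x : nat -> R) j : R := Rdiv (x j) (INR (fact j)).
Definition cc (x : nat -> R) j a : R := Rmult (Rinv (INR (fact a))) (pow (uu x j) a).

Definition Wl (x : nat -> R) B j L m : R :=
  List.fold_right Rplus R0 (List.map (bell_prod x j)
     (List.filter (fun k => Nat.eqb (wsum j k) m) (all_lists L B))).

Lemma Wl0 x B j m : Wl x B j 0 m = (m == 0%N)%:R.
Proof. rewrite /Wl /=; case: m => //=; rewrite Rplus_0_r; reflexivity. Qed.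

Lemma WlS x B j L m : Wl x B j L.+1 m =
  \sum_(0 <= a < B.+1) cc x j a * (if (j * a <= m)%N then Wl x B j.+1 L (m - j * a)%N else 0).
Proof.
rewrite /Wl foldr_big.
have -> : all_lists L.+1 B = List.flat_map (fun a => List.map (cons a) (all_lists L B)) (List.seq 0 B.+1) by [].
rewrite flat_map_flatten big_flatten big_map seq_iota /index_iota subn0.
apply: eq_bigr => a _.
rewrite Lmap_map big_map.
case: leqP => ha.
  rewrite foldr_big mulr_sumr.
  apply: eq_big => k /=.
    by rewrite !eqbE plusE multE -[in RHS](eqn_add2l (j * a)) subnKC.
  by move=> _.
rewrite mulr0 big1 // => k; rewrite /= eqbE => /eqP hk.
by move: ha; rewrite -hk ltnNge leq_addr.
Qed.

Definition Ec (x : nat -> R) B j : {poly R} := \sum_(0 <= a < B.+1) cc x j a *: 'X^(j * a).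
Fixpoint Pp (x : nat -> R) B j L : {poly R} :=
  match L with 0 => 1 | L'.+1 => Ec x B j * Pp x B j.+1 L' end.

Lemma Wl_Pp x B L : forall j m, Wl x B j L m = (Pp x B j L)`_m.
Proof.
elim: L => [|L IH] j m; first by rewrite Wl0 coef1.
rewrite WlS /= /Ec mulr_suml coef_sum; apply: eq_bigr => a _.
rewrite -scalerAl coefZ coefXnM ltnNge.
by case: leqP => h //=; rewrite IH.
Qed.



Definition Dp (p : {poly R}) := 'X * p^`().
Definition trB B (p : {poly R}) := exists s : {poly R}, p = 'X^(B.+1) * s.

Lemma trB0 B : trB B 0. Proof. by exists 0; rewrite mulr0. Qed.
Lemma trBD B p q : trB B p -> trB B q -> trB B (p + q).
Proof. by move=> [s ->] [t ->]; exists (s + t); rewrite mulrDr. Qed.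
Lemma trBMr B p q : trB B p -> trB B (p * q).
Proof. by move=> [s ->]; exists (s * q); rewrite mulrA. Qed.
Lemma trBMl B p q : trB B p -> trB B (q * p).
Proof. by move=> h; rewrite mulrC; apply: trBMr. Qed.
Lemma trB_coef B p m : trB B p -> (m <= B)%N -> p`_m = 0.
Proof. by move=> [s ->] hm; rewrite coefXnM ltnS hm. Qed.

Lemma Dp_M p q : Dp (p * q) = Dp p * q + p * Dp q.
Proof. by rewrite /Dp derivM mulrDr mulrA mulrCA. Qed.

Lemma Dp_Xn n : Dp ('X^n) = n%:R *: 'X^n.
Proof.
rewrite /Dp derivXn scaler_nat; case: n => [|n]; first by rewrite !mulr0n mulr0.
by rewrite mulrnAr -exprS.
Qed.

Lemma Dp_Ec_eq x B j :
  Dp (Ec x B j) = \sum_(0 <= a < B.+1) (cc x j a * (j * a)%:R) *: 'X^(j * a).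
Proof.
rewrite /Ec /Dp raddf_sum mulr_sumr; apply: eq_bigr => a _.
by rewrite /= derivZ -scalerAr -/(Dp _) Dp_Xn scalerA.
Qed.

Lemma cc_succR x j a : Rmult (cc x j a.+1) (INR (j * a.+1)) = Rmult (Rmult (INR j) (uu x j)) (cc x j a).
Proof.
have hf : INR (fact a.+1) = Rmult (INR a.+1) (INR (fact a)) by rewrite -mult_INR.
rewrite /cc hf mult_INR.
change (pow (uu x j) a.+1) with (Rmult (uu x j) (pow (uu x j) a)).
have h1 := INR_fact_neq_0 a.
have h2 : INR a.+1 <> R0 by apply: not_0_INR.
by field.
Qed.

Lemma cc_succ x j a : cc x j a.+1 * (j * a.+1)%:R = (j%:R * uu x j) * cc x j a.
Proof. rewrite !natE; exact: cc_succR. Qed.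


Lemma Dp_Ec x B j : (0 < j)%N ->
  trB B (Dp (Ec x B j) - ((j%:R * uu x j) *: 'X^j) * Ec x B j).
Proof.
move=> hj.
have e1 : Dp (Ec x B j) =
    \sum_(0 <= a < B) ((j%:R * uu x j) * cc x j a) *: 'X^(j * a.+1).
  rewrite Dp_Ec_eq big_nat_recl // muln0 mulr0 scale0r add0r.
  by apply: eq_bigr => a _; rewrite cc_succ.
have e2 : ((j%:R * uu x j) *: 'X^j) * Ec x B j =
    \sum_(0 <= a < B) ((j%:R * uu x j) * cc x j a) *: 'X^(j * a.+1)
    + ((j%:R * uu x j) * cc x j B) *: 'X^(j * B.+1).
  rewrite /Ec mulr_sumr big_nat_recr //=; congr (_ + _); first apply: eq_bigr => a _;
  by rewrite -scalerAl -scalerAr scalerA -exprD mulnS.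
rewrite e1 e2 opprD addrA subrr add0r.
exists (- ((j%:R * uu x j) * cc x j B) *: 'X^(j * B.+1 - B.+1)).
by rewrite -scalerAr -exprD subnKC ?scaleNr // leq_pmull.
Qed.

Fixpoint Gp (x : nat -> R) j L : {poly R} :=
  match L with 0 => 0 | L'.+1 => (j%:R * uu x j) *: 'X^j + Gp x j.+1 L' end.

Lemma addsub4 (u v w z : {poly R}) : u + v - (w + z) = (u - w) + (v - z).
Proof. by rewrite opprD addrACA. Qed.

Lemma Dp_Pp x B L : forall j, (0 < j)%N ->
  trB B (Dp (Pp x B j L) - Gp x j L * Pp x B j L).
Proof.
elim: L => [|L IH] j hj /=.
  by rewrite /Dp -polyC1 derivC mulr0 mul0r subrr; exact: trB0.
set E := Ec x B j; set P := Pp x B j.+1 L; set a := (j%:R * uu x j) *: 'X^j.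
set G := Gp x j.+1 L.
have -> : Dp (E * P) - (a + G) * (E * P) = (Dp E - a * E) * P + E * (Dp P - G * P).
  by rewrite Dp_M mulrDl mulrBl mulrBr [a * (E * P)]mulrA [G * (E * P)]mulrCA addsub4.
apply: trBD; first by apply: trBMr; exact: Dp_Ec.
by apply: trBMl; exact: IH.
Qed.

Lemma coef_Gp x L : forall j s, (Gp x j L)`_s =
  if (j <= s < j + L)%N then s%:R * uu x s else 0.
Proof.
elim: L => [|L IH] j s /=; first by rewrite coef0 addn0; case: leqP => h //; rewrite ltnNge h.
rewrite coefD coefZ coefXn IH addSnnS.
case: (ltngtP s j) => h.
- by rewrite mulr0 add0r.
- by rewrite mulr0 add0r.
- by rewrite h mulr1 addr0 /= addnS ltnS leq_addr.
Qed.

Lemma cc0 x j : cc x j 0 = 1.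
Proof. rewrite /cc /=. exact: (eq_trans (Rmult_1_r _) Rinv_1). Qed.

Lemma Ec_coef0 x B j : (0 < j)%N -> (Ec x B j)`_0 = 1.
Proof.
move=> hj; rewrite /Ec coef_sum (big_nat_recl B 0) // coefZ coefXn muln0 eqxx mulr1 cc0.
rewrite big1 ?addr0 // => a _; rewrite coefZ coefXn.
by rewrite eq_sym muln_eq0 orbF (negbTE (lt0n_neq0 hj)) mulr0.
Qed.

Lemma Pp_coef0 x B L : forall j, (0 < j)%N -> (Pp x B j L)`_0 = 1.
Proof.
elim: L => [|L IH] j hj /=; first by rewrite coef1.
by rewrite coef0M Ec_coef0 // IH // mul1r.
Qed.

Lemma Dp_coef p m : (Dp p)`_m = p`_m *+ m.
Proof. by rewrite /Dp coefXM; case: m => [|m] //=; rewrite coef_deriv. Qed.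

Lemma Z_rec x B L m : (m <= B)%N ->
  (Pp x B 1 L)`_m *+ m = \sum_(i < m.+1) (Gp x 1 L)`_i * (Pp x B 1 L)`_(m - i).
Proof.
move=> hm; rewrite -Dp_coef -coefM.
have := trB_coef B _ m (Dp_Pp x B L 1 isT) hm.
by rewrite coefB => /eqP; rewrite subr_eq0 => /eqP.
Qed.

Close Scope ring_scope.
Open Scope R_scope.


Fixpoint sumR (n : nat) (f : nat -> R) : R :=
  match n with 0%N => 0 | S n' => sumR n' f + f n' end.

Lemma sumR_ext n f g : (forall i, (i < n)%N -> f i = g i) -> sumR n f = sumR n g.
Proof.
elim: n => [//|n IH] h /=; rewrite IH ?h // => i hi; apply: h; exact: ltnW.
Qed.
Lemma sumR_plus n f g : sumR n (fun i => f i + g i) = sumR n f + sumR n g.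
Proof. elim: n => [/=|n IH /=]; [lra| rewrite IH; lra]. Qed.
Lemma sumR_minus n f g : sumR n (fun i => f i - g i) = sumR n f - sumR n g.
Proof. elim: n => [/=|n IH /=]; [lra| rewrite IH; lra]. Qed.
Lemma sumR_scal n c f : sumR n (fun i => c * f i) = c * sumR n f.
Proof. elim: n => [/=|n IH /=]; [ring| rewrite IH; ring]. Qed.
Lemma sumR_scalr n c f : sumR n (fun i => f i * c) = sumR n f * c.
Proof. elim: n => [/=|n IH /=]; [ring| rewrite IH; ring]. Qed.
Lemma sumR_shift n f : sumR n.+1 f = f 0%N + sumR n (fun i => f i.+1).
Proof. elim: n => [/=|n IH]; first lra. change (sumR n.+2 f) with (sumR n.+1 f + f n.+1). rewrite IH /=; lra. Qed.
Lemma sumR_zero n : sumR n (fun _ => 0) = 0.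
Proof. elim: n => [//|n IH /=]; rewrite IH; lra. Qed.
Lemma sumR_le n f g : (forall i, (i < n)%N -> f i <= g i) -> sumR n f <= sumR n g.
Proof.
elim: n => [/=|n IH] h; first lra.
simpl; have := h n (ltnSn n); have : sumR n f <= sumR n g by apply: IH => i hi; apply: h; exact: ltnW.
lra.
Qed.
Lemma sumR_abs n f : Rabs (sumR n f) <= sumR n (fun i => Rabs (f i)).
Proof.
elim: n => [/=|n IH /=]; first by rewrite Rabs_R0; lra.
have := Rabs_triang (sumR n f) (f n); lra.
Qed.

Lemma big_sumR n (f : nat -> R) : (\sum_(i < n) f i)%R = sumR n f.
Proof. elim: n => [|n IH]; first by rewrite big_ord0. by rewrite big_ord_recr /= IH. Qed.

Lemma foldr_seq_sumR (f : nat -> R) s n :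
  List.fold_right Rplus 0 (List.map f (List.seq s n)) = sumR n (fun k => f (s + k)%N).
Proof.
elim: n s => [//|n IH] s.
rewrite sumR_shift /= IH addn0; congr (_ + _); apply: sumR_ext => i _; by rewrite addSnnS.
Qed.

Lemma harm_sumR n m : harm n m = sumR n (fun k => / INR k.+1 ^ m).
Proof. by rewrite /harm foldr_seq_sumR. Qed.

Lemma harm_S n m : harm n.+1 m = harm n m + / INR n.+1 ^ m.
Proof. by rewrite !harm_sumR. Qed.
Lemma harm_0 m : harm 0 m = 0.
Proof. by []. Qed.

Fixpoint hh (m n : nat) {struct m} : R :=
  match m with
  | 0%N => 1
  | S m' => (fix g (n : nat) : R :=
              match n with 0%N => 0 | S n' => g n' + hh m' (S n') / INR (S n') end) n
  end.

Lemma hh0 n : hh 0 n = 1. Proof. by []. Qed.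
Lemma hhS0 m : hh m.+1 0 = 0. Proof. by []. Qed.
Lemma hhSS m n : hh m.+1 n.+1 = hh m.+1 n + hh m n.+1 / INR n.+1. Proof. by []. Qed.

Definition gn n i := if i == 0%N then 0 else harm n i.

Lemma gn_S n i : gn n.+1 i = gn n i + (if i == 0%N then 0 else (/ INR n.+1) ^ i).
Proof. rewrite /gn; case: eqP => _; first lra. by rewrite harm_S pow_inv. Qed.

Lemma gn_0 i : gn 0 i = 0.
Proof. by rewrite /gn; case: eqP. Qed.

Lemma newton n m : INR m * hh m n = sumR m.+1 (fun i => gn n i * hh (m - i) n).
Proof.
elim: n m => [|n IHn] m.
  case: m => [|m]; first by rewrite /= gn_0; lra.
  rewrite hhS0 (sumR_ext _ _ (fun _ => 0)) ?sumR_zero; first lra.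
  by move=> i _; rewrite gn_0; lra.
elim: m => [|m IHm]; first by rewrite /= /gn /=; lra.
set y := / INR n.+1.
set yv := fun i => if i == 0%N then 0 else y ^ i.
have bS : forall k, hh k.+1 n.+1 = hh k.+1 n + hh k n.+1 * y by move=> k; rewrite hhSS.
have S1 : sumR m.+2 (fun i => gn n.+1 i * hh (m.+1 - i) n.+1) =
   sumR m.+2 (fun i => gn n i * hh (m.+1 - i) n.+1) + sumR m.+2 (fun i => yv i * hh (m.+1 - i) n.+1).
  rewrite -sumR_plus; apply: sumR_ext => i _; rewrite gn_S /yv /y; ring.
have S2 : sumR m.+2 (fun i => gn n i * hh (m.+1 - i) n.+1) =
   sumR m.+2 (fun i => gn n i * hh (m.+1 - i) n) + sumR m.+1 (fun i => gn n i * hh (m - i) n.+1) * y.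
  change (sumR m.+1 (fun i => gn n i * hh (m.+1 - i) n.+1) + gn n m.+1 * hh (m.+1 - m.+1) n.+1 =
    (sumR m.+1 (fun i => gn n i * hh (m.+1 - i) n) + gn n m.+1 * hh (m.+1 - m.+1) n) +
    sumR m.+1 (fun i => gn n i * hh (m - i) n.+1) * y).
  rewrite subnn !hh0 (sumR_ext m.+1 (fun i => gn n i * hh (m.+1 - i) n.+1)
    (fun i => gn n i * hh (m.+1 - i) n + (gn n i * hh (m - i) n.+1) * y)).
    rewrite sumR_plus sumR_scalr; ring.
  move=> i hi; rewrite subSn // bS; ring.
have S3 : sumR m.+2 (fun i => yv i * hh (m.+1 - i) n.+1) =
   (hh m n.+1 + sumR m.+1 (fun i => yv i * hh (m - i) n.+1)) * y.
  rewrite (sumR_shift m.+1) (sumR_shift m (fun i => yv i * hh (m - i) n.+1)).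
  rewrite (sumR_shift m (fun i => yv i.+1 * hh (m.+1 - i.+1) n.+1)).
  rewrite (sumR_ext m (fun i => yv i.+2 * hh (m.+1 - i.+2) n.+1)
     (fun i => (yv i.+1 * hh (m - i.+1) n.+1) * y)).
    have yv0 : yv 0%N = 0 by []. have yv1 : yv 1%N = y by rewrite /yv /= Rmult_1_r.
    rewrite sumR_scalr yv0 yv1 subn0 subSS subn0; ring.
  by move=> i _; rewrite /yv /= subSS; ring.
rewrite S1 S2 S3 bS.
have E1 := IHn m.+1.
have E2 : INR m * hh m n.+1 = sumR m.+1 (fun i => gn n i * hh (m - i) n.+1) + sumR m.+1 (fun i => yv i * hh (m - i) n.+1).
  rewrite IHm -sumR_plus; apply: sumR_ext => i _; rewrite gn_S /yv /y; ring.
rewrite S_INR.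
have -> : (INR m + 1) * (hh m.+1 n + hh m n.+1 * y) =
   INR m.+1 * hh m.+1 n + (INR m * hh m n.+1) * y + hh m n.+1 * y by rewrite S_INR; ring.
rewrite E1 E2; ring.
Qed.

Definition xn n : nat -> R := fun j => INR (fact (j - 1)) * harm n j.

Lemma uu_xn n i : (0 < i)%N -> INR i * uu (xn n) i = harm n i.
Proof.
case: i => [//|i] _.
rewrite /uu /xn.
rewrite subSS subn0.
have -> : INR (fact i.+1) = INR i.+1 * INR (fact i) by rewrite -mult_INR.
have h1 := INR_fact_neq_0 i.
have h2 : INR i.+1 <> 0 by apply: not_0_INR.
field; auto.
Qed.

Lemma Gp_xn n r i : (i <= r)%N -> ((Gp (xn n) 1 r)`_i)%R = gn n i.
Proof.
move=> hi; rewrite coef_Gp /gn.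
case: i hi => [|i] hi //=.
rewrite add1n ltnS hi natE mulE; exact: uu_xn.
Qed.

Lemma Z_hh n r m : (m <= r)%N -> ((Pp (xn n) r 1 r)`_m)%R = hh m n.
Proof.
elim/ltn_ind: m => m IH hm.
case: m IH hm => [|m] IH hm; first by rewrite Pp_coef0.
have e := Z_rec (xn n) r r m.+1 hm.
rewrite -mulr_natr natE (big_sumR m.+2 (fun k => ((Gp (xn n) 1 r)`_k * (Pp (xn n) r 1 r)`_(m.+1 - k))%R)) in e.
have e2 := newton n m.+1.
have hne : INR m.+1 <> 0 by apply: not_0_INR.
apply: (Rmult_eq_reg_l (INR m.+1)) => //.
rewrite e2 Rmult_comm.
rewrite mulE in e; rewrite e.
rewrite sumR_shift [sumR m.+2 _]sumR_shift subn0.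
have g0 : gn n 0%N = 0 by [].
rewrite Gp_xn // g0 mulE !Rmult_0_l !Rplus_0_l.
apply: sumR_ext => i hi.
rewrite Gp_xn; last by apply: leq_trans hm.
rewrite IH // subSS; first by rewrite ltnS leq_subr.
apply: leq_trans (ltnW hm); exact: leq_subr.
Qed.

Lemma foldr_scal (c : R) (f : list nat -> R) l :
  List.fold_right Rplus 0 (List.map (fun k => c * f k) l) = c * List.fold_right Rplus 0 (List.map f l).
Proof. elim: l => [/=|a l IH /=]; [ring | rewrite IH; ring]. Qed.

Lemma bellY_hh r n : bellY r (xn n) = INR (fact r) * hh r n.
Proof.
rewrite /bellY foldr_scal; congr (_ * _).
have := Wl_Pp (xn n) r r 1 r; rewrite /Wl => ->.
exact: Z_hh.
Qed.

Close Scope ring_scope.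
Open Scope R_scope.


Definition Bs r n := sumR n (fun k => (-1) ^ k * INR 'C(n, k.+1) / INR k.+1 ^ r).

Lemma INR_muln a b : INR (a * b)%N = INR a * INR b.
Proof. by rewrite -multE mult_INR. Qed.
Lemma INR_addn a b : INR (a + b)%N = INR a + INR b.
Proof. by rewrite -plusE plus_INR. Qed.

Lemma alt_binom n : sumR n.+1 (fun k => (-1) ^ k * INR 'C(n.+1, k.+1)) = 1.
Proof.
elim: n => [|n IH]; first by simpl; lra.
rewrite (sumR_ext _ _ (fun k => (-1) ^ k * INR 'C(n.+1, k.+1) + (-1) ^ k * INR 'C(n.+1, k))); last first.
  by move=> i _; rewrite binS INR_addn; ring.
rewrite sumR_plus.
change (sumR n.+2 (fun k => (-1) ^ k * INR 'C(n.+1, k.+1))) with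
  (sumR n.+1 (fun k => (-1) ^ k * INR 'C(n.+1, k.+1)) + (-1) ^ n.+1 * INR 'C(n.+1, n.+2)).
rewrite IH bin_small // sumR_shift bin0.
rewrite (sumR_ext _ _ (fun k => -1 * ((-1) ^ k * INR 'C(n.+1, k.+1)))); last first.
  by move=> i _ /=; ring.
rewrite sumR_scal IH /=; ring.
Qed.

Lemma Bs0 n : Bs 0 n.+1 = 1.
Proof.
rewrite /Bs -(alt_binom n); apply: sumR_ext => i _ /=; field.
Qed.

Lemma BsS r n : Bs r.+1 n.+1 = Bs r.+1 n + Bs r n.+1 / INR n.+1.
Proof.
rewrite /Bs.
rewrite (sumR_ext _ _ (fun k => (-1) ^ k * INR 'C(n, k.+1) / INR k.+1 ^ r.+1 +
    ((-1) ^ k * INR 'C(n.+1, k.+1) / INR k.+1 ^ r) / INR n.+1)); last first.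
  move=> k _.
  have hb : INR 'C(n.+1, k.+1) = INR 'C(n, k.+1) + INR 'C(n, k) by rewrite binS INR_addn.
  have e := mul_bin_diag n.+1 k.
  have e' : INR n.+1 * INR 'C(n, k) = INR k.+1 * INR 'C(n.+1, k.+1).
    by rewrite -!INR_muln; congr INR.
  have h1 : INR n.+1 <> 0 by apply: not_0_INR.
  have h2 : INR k.+1 <> 0 by apply: not_0_INR.
  have h3 : INR k.+1 ^ r <> 0 by apply: pow_nonzero.
  have hc : INR 'C(n, k) = INR k.+1 * INR 'C(n.+1, k.+1) / INR n.+1 by rewrite -e'; field.
  rewrite {1}hb hc -!tech_pow_Rmult; field; auto.
rewrite sumR_plus sumR_scalr.
change (sumR n.+1 (fun k => (-1) ^ k * INR 'C(n, k.+1) / INR k.+1 ^ r.+1)) with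
  (sumR n (fun k => (-1) ^ k * INR 'C(n, k.+1) / INR k.+1 ^ r.+1) +
     (-1) ^ n * INR 'C(n, n.+1) / INR n.+1 ^ r.+1).
have h1 : INR n.+1 <> 0 by apply: not_0_INR.
have h3 : INR n.+1 ^ r.+1 <> 0 by apply: pow_nonzero.
rewrite bin_small // (_ : INR 0 = 0) //; field; auto.
Qed.

Lemma hh_Bs r : forall n, (0 < r + n)%N -> hh r n = Bs r n.
Proof.
elim: r => [|r IHr] n hn.
  case: n hn => [//|n] _; by rewrite Bs0.
elim: n {hn} => [|n IHn]; first by [].
rewrite hhSS IHn // IHr; last by rewrite addnS.
by rewrite (BsS r n).
Qed.

Definition Sb M k := sumR k.+1 (fun j => INR 'C(M, j)).

Lemma Sb_pascal M k : Sb M.+1 k = 2 * Sb M k - INR 'C(M, k).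
Proof.
elim: k => [|k IH]; first by rewrite /Sb /= !bin0 /=; ring.
change (Sb M.+1 k.+1 = 2 * (Sb M k + INR 'C(M, k.+1)) - INR 'C(M, k.+1)).
change (Sb M.+1 k + INR 'C(M.+1, k.+1) = 2 * (Sb M k + INR 'C(M, k.+1)) - INR 'C(M, k.+1)).
rewrite IH binS INR_addn; ring.
Qed.

Lemma Sb_full M : Sb M M = 2 ^ M.
Proof.
elim: M => [|M IH]; first by rewrite /Sb /=; ring.
rewrite Sb_pascal.
change (2 * (Sb M M + INR 'C(M, M.+1)) - INR 'C(M, M.+1) = 2 ^ M.+1).
rewrite IH bin_small //= ; ring.
Qed.

Lemma Sb_le M k : Sb M k <= 2 ^ M.
Proof.
elim: M k => [|M IH] k.
  have -> : Sb 0 k = 1.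
    elim: k => [|k IHk]; first by rewrite /Sb /=; ring.
    change (Sb 0 k + INR 'C(0, k.+1) = 1); rewrite IHk /=; ring.
  simpl; lra.
rewrite Sb_pascal; have := IH k; have := pos_INR 'C(M, k); simpl; lra.
Qed.

Definition aa r k := (-1) ^ k / INR k.+1 ^ r.
Definition eta r N := sumR N (aa r).
Definition Aser r N := sumR N (fun n => / 2 ^ n.+2 * hh r n.+1).
Definition En r N := / 2 ^ N.+1 * sumR N (fun k => aa r k * Sb N.+1 k.+1).

Lemma Bs_aa r N : Bs r N = sumR N (fun k => aa r k * INR 'C(N, k.+1)).
Proof. apply: sumR_ext => k _; rewrite /aa; field; apply: pow_nonzero; exact: not_0_INR. Qed.

Lemma A_eq r N : Aser r N = eta r N - En r N.
Proof.
elim: N => [|N IH]; first by rewrite /Aser /eta /En /=; ring.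
have hA : Aser r N.+1 = Aser r N + / 2 ^ N.+2 * Bs r N.+1.
  by rewrite /Aser [sumR N.+1 _]/= hh_Bs // addnS.
have hE : En r N.+1 = En r N + aa r N - / 2 ^ N.+2 * Bs r N.+1.
  rewrite /En (sumR_ext _ _ (fun k => 2 * (aa r k * Sb N.+1 k.+1) - aa r k * INR 'C(N.+1, k.+1))); last first.
    by move=> k _; rewrite Sb_pascal; ring.
  rewrite sumR_minus sumR_scal -Bs_aa.
  change (sumR N.+1 (fun k => aa r k * Sb N.+1 k.+1)) with
    (sumR N (fun k => aa r k * Sb N.+1 k.+1) + aa r N * Sb N.+1 N.+1).
  rewrite Sb_full.
  have h2 : 2 ^ N.+1 <> 0 by apply: pow_nonzero; lra.
  change (2 ^ N.+2) with (2 * 2 ^ N.+1); field; auto.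
rewrite hA hE IH /eta /=; ring.
Qed.


Close Scope ring_scope.
Open Scope R_scope.


Definition tl (a : nat -> R) N p := sumR (N - p) (fun i => a (p + i)%N).

Lemma tl_S a N p : (p <= N)%N -> tl a N.+1 p = tl a N p + a N.
Proof. by move=> h; rewrite /tl subSn //= subnKC. Qed.

Lemma exch (a C : nat -> R) N :
  sumR N (fun k => a k * sumR k.+2 C) = C 0%N * tl a N 0 + sumR N (fun j => C j.+1 * tl a N j).
Proof.
elim: N => [|N IH]; first by rewrite /tl /=; ring.
change (sumR N.+1 (fun k => a k * sumR k.+2 C)) with
  (sumR N (fun k => a k * sumR k.+2 C) + a N * sumR N.+2 C).
rewrite IH tl_S //.
change (sumR N.+1 (fun j => C j.+1 * tl a N.+1 j)) with
  (sumR N (fun j => C j.+1 * tl a N.+1 j) + C N.+1 * tl a N.+1 N).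
rewrite (sumR_ext N (fun j => C j.+1 * tl a N.+1 j) (fun j => C j.+1 * tl a N j + a N * C j.+1)); last first.
  by move=> j hj; rewrite tl_S; [ring | exact: ltnW].
rewrite sumR_plus sumR_scal.
have -> : tl a N.+1 N = a N by rewrite /tl subSn //= subnn /= addn0; ring.
rewrite (sumR_shift N.+1 C).
change (sumR N.+1 (fun i => C i.+1)) with (sumR N (fun i => C i.+1) + C N.+1).
ring.
Qed.

Lemma alt_bound L : forall d : nat -> R, (forall i, 0 <= d i) -> (forall i, d i.+1 <= d i) ->
  0 <= sumR L (fun i => (-1) ^ i * d i) <= d 0%N.
Proof.
elim: L => [|L IH] d hp hd; first by simpl; have := hp 0%N; lra.
rewrite sumR_shift.
rewrite (sumR_ext L _ (fun i => -1 * ((-1) ^ i * d i.+1))); last by move=> i _ /=; ring.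
rewrite sumR_scal.
have := IH (fun i => d i.+1) (fun i => hp i.+1) (fun i => hd i.+1).
have := hd 0%N; simpl; lra.
Qed.

Lemma tl_bound r N p : (0 < r)%N -> Rabs (tl (aa r) N p) <= / INR p.+1.
Proof.
move=> hr.
set d := fun i => / INR (p + i).+1 ^ r.
have hp : forall i, 0 <= d i.
  move=> i; rewrite /d; apply: Rlt_le; apply: Rinv_0_lt_compat; apply: pow_lt; apply: lt_0_INR; exact/ltP.
have hd : forall i, d i.+1 <= d i.
  move=> i; rewrite /d; apply: Rinv_le_contravar; first by apply: pow_lt; apply: lt_0_INR; exact/ltP.
  apply: pow_incr; split; [apply: pos_INR| apply: le_INR; apply/leP; rewrite addnS; exact: leqnSn].
have e : tl (aa r) N p = (-1) ^ p * sumR (N - p) (fun i => (-1) ^ i * d i).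
  rewrite /tl -sumR_scal; apply: sumR_ext => i _; rewrite /aa /d pow_add; field.
  apply: pow_nonzero; apply: not_0_INR => //.
rewrite e Rabs_mult pow_1_abs Rmult_1_l.
have [h1 h2] := alt_bound (N - p) d hp hd.
rewrite Rabs_right; last lra.
apply: Rle_trans h2 _.
rewrite /d addn0.
have h3 : 1 <= INR p.+1 by rewrite S_INR; have := pos_INR p; lra.
apply: Rinv_le_contravar; first lra.
clear e h1 hp hd d.
case: r hr => [//|r] _.
rewrite -tech_pow_Rmult -{1}(Rmult_1_r (INR p.+1)).
apply: Rmult_le_compat_l; first lra.
by apply: pow_R1_Rle.
Qed.

Lemma En_bound r N : (0 < r)%N -> Rabs (En r N) <= / 2 ^ N.+1 + 4 / INR N.+2.
Proof.
move=> hr.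
set M := N.+1.
have hM : 0 < INR M.+1 by apply: lt_0_INR; exact/ltP.
have h2M : 0 < 2 ^ M by apply: pow_lt; lra.
have ex : En r N = / 2 ^ M * (tl (aa r) N 0 + sumR N (fun j => INR 'C(M, j.+1) * tl (aa r) N j)).
  by rewrite /En /Sb exch bin0 Rmult_1_l.
have b1 : Rabs (tl (aa r) N 0) <= 1.
  have := tl_bound r N 0 hr; rewrite (_ : INR 1 = 1) // Rinv_1 //.
have b2 : forall j, Rabs (INR 'C(M, j.+1) * tl (aa r) N j) <= 2 / INR M.+1 * INR 'C(M.+1, j.+2).
  move=> j.
  have hj : 0 < INR j.+1 by apply: lt_0_INR; exact/ltP.
  have e' : INR M.+1 * INR 'C(M, j.+1) = INR j.+2 * INR 'C(M.+1, j.+2).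
    by rewrite -!INR_muln; congr INR; exact: mul_bin_diag.
  rewrite Rabs_mult (Rabs_pos_eq (INR _)); last exact: pos_INR.
  apply: Rle_trans (Rmult_le_compat_l _ _ _ (pos_INR _) (tl_bound r N j hr)) _.
  have hc : INR 'C(M, j.+1) = INR j.+2 * INR 'C(M.+1, j.+2) / INR M.+1.
    rewrite -e'; field; lra.
  rewrite hc.
  have hC := pos_INR 'C(M.+1, j.+2).
  have hj2 : INR j.+2 = INR j.+1 + 1 by rewrite S_INR.
  rewrite hj2.
  apply: (Rmult_le_reg_r (INR M.+1 * INR j.+1)); first by apply: Rmult_lt_0_compat.
  have -> : (INR j.+1 + 1) * INR 'C(M.+1, j.+2) / INR M.+1 * / INR j.+1 * (INR M.+1 * INR j.+1)
     = (INR j.+1 + 1) * INR 'C(M.+1, j.+2) by field; lra.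
  have -> : 2 / INR M.+1 * INR 'C(M.+1, j.+2) * (INR M.+1 * INR j.+1)
     = 2 * INR j.+1 * INR 'C(M.+1, j.+2) by field; lra.
  have : 1 <= INR j.+1 by rewrite S_INR; have := pos_INR j; lra.
  nra.
have b3 : sumR N (fun j => INR 'C(M.+1, j.+2)) <= 2 ^ M.+1.
  apply: Rle_trans (Sb_le M.+1 N.+1).
  rewrite /Sb sumR_shift sumR_shift.
  have := pos_INR 'C(M.+1, 0); have := pos_INR 'C(M.+1, 1); lra.
rewrite ex Rabs_mult Rabs_pos_eq; last by apply: Rlt_le; apply: Rinv_0_lt_compat.
apply: Rle_trans (Rmult_le_compat_l _ _ _ (Rlt_le _ _ (Rinv_0_lt_compat _ h2M)) (Rabs_triang _ _)) _.
have hs : Rabs (sumR N (fun j => INR 'C(M, j.+1) * tl (aa r) N j)) <=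
    2 / INR M.+1 * sumR N (fun j => INR 'C(M.+1, j.+2)).
  apply: Rle_trans (sumR_abs _ _) _.
  rewrite -sumR_scal; apply: sumR_le => j _; exact: b2.
have hfin : / 2 ^ M * (1 + 2 / INR M.+1 * 2 ^ M.+1) = / 2 ^ M + 4 / INR M.+1.
  change (2 ^ M.+1) with (2 * 2 ^ M); field; lra.
rewrite -hfin.
apply: Rmult_le_compat_l; first by apply: Rlt_le; apply: Rinv_0_lt_compat.
have : 0 <= 2 / INR M.+1 by apply: Rlt_le; apply: Rdiv_lt_0_compat; lra.
nra.
Qed.

Close Scope ring_scope.
Open Scope R_scope.


Definition zs r N := sumR N (fun k => / INR k.+1 ^ r).

Lemma Un_cv_ext (u v : nat -> R) l : (forall n, u n = v n) -> Un_cv u l -> Un_cv v l.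
Proof. move=> h H eps he; have [N HN] := H eps he; exists N => n hn; rewrite -h; exact: HN. Qed.

Lemma m1_even N : (-1) ^ N.*2 = 1.
Proof. elim: N => [//|N IH]; rewrite doubleS /= IH; ring. Qed.

Lemma INR_double N : INR N.*2 = 2 * INR N.
Proof. by rewrite -mul2n INR_muln. Qed.

Lemma eta_even r N : eta r N.*2 = zs r N.*2 - 2 / 2 ^ r * zs r N.
Proof.
elim: N => [|N IH]; first by rewrite /eta /zs /=; ring.
rewrite doubleS.
change (eta r (N.*2).+2) with (eta r N.*2 + aa r N.*2 + aa r (N.*2).+1).
change (zs r (N.*2).+2) with (zs r N.*2 + / INR (N.*2).+1 ^ r + / INR (N.*2).+2 ^ r).
change (zs r N.+1) with (zs r N + / INR N.+1 ^ r).
rewrite IH /aa -(tech_pow_Rmult (-1)) m1_even -doubleS INR_double Rpow_mult_distr.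
have h1 : INR N.+1 ^ r <> 0 by apply: pow_nonzero; apply: not_0_INR.
have h2 : INR (N.*2).+1 ^ r <> 0 by apply: pow_nonzero; apply: not_0_INR.
have h3 : 2 ^ r <> 0 by apply: pow_nonzero; lra.
field; auto.
Qed.

Lemma zs_S r N : zs r N.+1 = zs r N + / INR N.+1 ^ r.
Proof. by []. Qed.

Lemma zs_ub r : (2 <= r)%N -> forall N, zs r N.+1 <= 2 - / INR N.+1.
Proof.
move=> hr; elim => [|N IH].
  rewrite /zs /= pow1 Rinv_1; lra.
rewrite zs_S.
have hN : 0 < INR N.+1 by apply: lt_0_INR; exact/ltP.
have hN2 : INR N.+2 = INR N.+1 + 1 by rewrite S_INR.
suff : / INR N.+2 ^ r <= / INR N.+1 - / INR N.+2 by lra.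
have -> : / INR N.+1 - / INR N.+2 = / (INR N.+1 * INR N.+2) by rewrite hN2; field; lra.
apply: Rinv_le_contravar; first by apply: Rmult_lt_0_compat; lra.
clear IH; case: r hr => [|[|r]] // _.
rewrite -!tech_pow_Rmult.
have h1 : 1 <= INR N.+2 ^ r by apply: pow_R1_Rle; lra.
nra.
Qed.

Lemma zs_cv r : (2 <= r)%N -> { z | Un_cv (zs r) z }.
Proof.
move=> hr; apply: growing_cv.
  move=> n; rewrite zs_S; have : 0 < / INR n.+1 ^ r.
    by apply: Rinv_0_lt_compat; apply: pow_lt; apply: lt_0_INR; exact/ltP.
  lra.
exists 2 => x [n ->].
case: n => [|n]; first by rewrite /zs /=; lra.
have := zs_ub r hr n; have : 0 < / INR n.+1 by apply: Rinv_0_lt_compat; apply: lt_0_INR; exact/ltP.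
lra.
Qed.

Lemma c_le1 r : (1 <= r)%N -> 2 / 2 ^ r <= 1.
Proof.
case: r => [|r] // _.
have h2 : 1 <= 2 ^ r by apply: pow_R1_Rle; lra.
rewrite -tech_pow_Rmult.
apply: (Rmult_le_reg_r (2 * 2 ^ r)); first lra.
have -> : 2 / (2 * 2 ^ r) * (2 * 2 ^ r) = 2 by field; lra.
lra.
Qed.

Lemma eta_cv r z : (2 <= r)%N -> Un_cv (zs r) z -> Un_cv (eta r) ((1 - 2 / 2 ^ r) * z).
Proof.
move=> hr H eps he.
have he4 : eps / 4 > 0 by lra.
have [N1 HN1] := H (eps / 4) he4.
have hc0 : 0 <= 2 / 2 ^ r by apply: Rlt_le; apply: Rdiv_lt_0_compat; [lra | apply: pow_lt; lra].
have hc1 : 2 / 2 ^ r <= 1 by apply: c_le1; apply: leq_trans hr.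
exists N1.*2 => n /leP hn.
have hq : (N1 <= n./2)%N by rewrite -(doubleK N1); apply: half_leq.
have hq2 : (N1 <= (n./2).*2)%N by apply: leq_trans hq _; rewrite -addnn leq_addr.
have Hz1 := HN1 _ (elimT leP hq).
have Hz2 := HN1 _ (elimT leP hq2).
have Hz3 := HN1 _ (elimT leP (leq_trans hq2 (leqnSn _))).
rewrite /Rdist in Hz1 Hz2 Hz3 *.
have E0 : Rabs (eta r (n./2).*2 - (1 - 2 / 2 ^ r) * z) < eps / 2.
  rewrite eta_even.
  have -> : zs r (n./2).*2 - 2 / 2 ^ r * zs r n./2 - (1 - 2 / 2 ^ r) * z =
    (zs r (n./2).*2 - z) - 2 / 2 ^ r * (zs r n./2 - z) by ring.
  apply: Rle_lt_trans (Rabs_triang _ _) _.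
  rewrite Rabs_Ropp Rabs_mult (Rabs_pos_eq (2 / 2 ^ r)) //.
  have : 2 / 2 ^ r * Rabs (zs r n./2 - z) <= Rabs (zs r n./2 - z).
    have := Rabs_pos (zs r n./2 - z); nra.
  lra.
rewrite -(odd_double_half n).
case: (odd n) => /=; last by rewrite add0n; lra.
rewrite add1n.
change (eta r (n./2).*2.+1) with (eta r (n./2).*2 + aa r (n./2).*2).
have ha : Rabs (aa r (n./2).*2) = zs r (n./2).*2.+1 - zs r (n./2).*2.
  rewrite zs_S /aa m1_even Rabs_pos_eq; first by field; apply: pow_nonzero; apply: not_0_INR.
  rewrite Rdiv_1_l; apply: Rlt_le; apply: Rinv_0_lt_compat; apply: pow_lt; apply: lt_0_INR; exact/ltP.
have : Rabs (aa r (n./2).*2) < eps / 2.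
  rewrite ha.
  have := Rabs_triang (zs r (n./2).*2.+1 - z) (z - zs r (n./2).*2).
  rewrite Rabs_minus_sym in Hz2.
  have -> : zs r (n./2).*2.+1 - z + (z - zs r (n./2).*2) = zs r (n./2).*2.+1 - zs r (n./2).*2 by ring.
  have := Rle_abs (zs r (n./2).*2.+1 - zs r (n./2).*2). lra.
have := Rabs_triang (eta r (n./2).*2 - (1 - 2 / 2 ^ r) * z) (aa r (n./2).*2).
have -> : eta r (n./2).*2 - (1 - 2 / 2 ^ r) * z + aa r (n./2).*2 =
  eta r (n./2).*2 + aa r (n./2).*2 - (1 - 2 / 2 ^ r) * z by ring.
lra.
Qed.

Lemma pow2_ge n : INR n.+1 <= 2 ^ n.
Proof.
elim: n => [|n IH]; first by simpl; lra.
rewrite S_INR -tech_pow_Rmult.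
have : 1 <= 2 ^ n by apply: pow_R1_Rle; lra.
lra.
Qed.

Lemma En_cv r : (0 < r)%N -> Un_cv (En r) 0.
Proof.
move=> hr eps he.
have [N0 [HN0 HN0p]] := archimed_cor1 (eps / 5) ltac:(lra).
exists N0 => n /leP hn.
rewrite /Rdist Rminus_0_r.
apply: Rle_lt_trans (En_bound r n hr) _.
have h1 : 0 < INR N0 by apply: lt_0_INR.
have h2 : INR N0 <= INR n.+2 by apply: le_INR; apply/leP; apply: leq_trans hn (leq_trans (leqnSn n) (leqnSn n.+1)).
have h3 : INR n.+2 <= 2 ^ n.+1 by apply: pow2_ge.
have h4 : / 2 ^ n.+1 <= / INR n.+2 by apply: Rinv_le_contravar; first lra.
have h5 : / INR n.+2 <= / INR N0 by apply: Rinv_le_contravar.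
have : 4 / INR n.+2 = 4 * / INR n.+2 by [].
nra.
Qed.

Lemma Aser_cv r z : (2 <= r)%N -> Un_cv (zs r) z -> Un_cv (Aser r) ((1 - 2 / 2 ^ r) * z).
Proof.
move=> hr H.
have := CV_minus _ _ _ _ (eta_cv r z hr H) (En_cv r (leq_trans (ltn0Sn 1) hr)).
rewrite Rminus_0_r; apply: Un_cv_ext => n; by rewrite A_eq.
Qed.

Close Scope ring_scope.
Open Scope R_scope.


Lemma sum_f_sumR f n : sum_f_R0 f n = sumR n.+1 f.
Proof. elim: n => [/=|n IH]; first lra. by rewrite /= IH. Qed.

Lemma powerRZ_1r r : powerRZ 2 (Z.sub 1 (Z.of_nat r)) = 2 / 2 ^ r.
Proof.
have -> : Z.sub 1 (Z.of_nat r) = Z.add 1 (Z.opp (Z.of_nat r)) by [].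
rewrite powerRZ_add; last lra.
by rewrite powerRZ_neg' -pow_powerRZ /=; field; apply: pow_nonzero; lra.
Qed.

Theorem mainTheorem10 (r : nat) (hr : (2 <= r)%coq_nat) :
  exists z s : R,
    infinite_sum (fun k => / (INR (S k)) ^ r) z /\
    infinite_sum
      (fun m => / 2 ^ (S m + 1)%coq_nat *
         bellY r (fun j => INR (fact (j - 1)%coq_nat) * harm (S m) j)) s /\
    z = / ((1 - powerRZ 2 (Z.sub 1 (Z.of_nat r))) * INR (fact r)) * s.
Proof.
move/leP: hr => hr.
have [z Hz] := zs_cv r hr.
exists z, (INR (fact r) * ((1 - 2 / 2 ^ r) * z)).
split; [|split].
- move=> eps he; have [N HN] := Hz eps he.
  exists N => n hn; rewrite sum_f_sumR; apply: (HN n.+1); apply/leP; apply: leq_trans (leqnSn n); exact/leP.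
- have HA := Aser_cv r z hr Hz.
  have HA' : Un_cv (fun n => Aser r n.+1) ((1 - 2 / 2 ^ r) * z).
    move=> eps he; have [N HN] := HA eps he.
    exists N => n hn; apply: HN; apply/leP; apply: leq_trans (leqnSn n); exact/leP.
  have Hc : Un_cv (fun _ => INR (fact r)) (INR (fact r)).
    by move=> eps he; exists 0%N => n _; rewrite /Rdist Rminus_diag Rabs_R0.
  have := CV_mult _ _ _ _ Hc HA'.
  move=> H eps he; have [N HN] := H eps he; exists N => n hn.
  rewrite sum_f_sumR.
  have -> : sumR n.+1 (fun m => / 2 ^ (S m + 1)%coq_nat *
         bellY r (fun j => INR (fact (j - 1)%coq_nat) * harm (S m) j)) = INR (fact r) * Aser r n.+1.
    rewrite /Aser -sumR_scal; apply: sumR_ext => m _.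
    have -> : (S m + 1)%coq_nat = m.+2 by rewrite plusE addn1.
    have -> : bellY r (fun j => INR (fact (j - 1)%coq_nat) * harm (S m) j) = bellY r (xn m.+1) by [].
    rewrite bellY_hh; ring.
  exact: HN.
- rewrite powerRZ_1r.
  have h1 : INR (fact r) <> 0 by apply: INR_fact_neq_0.
  have h4 : 4 <= 2 ^ r.
    case: r hr {Hz} h1 => [|[|r]] // _ _.
    have : 1 <= 2 ^ r by apply: pow_R1_Rle; lra.
    rewrite -!tech_pow_Rmult; lra.
  field; split; [lra | split; [exact: h1 | lra]].
Qed.
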